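(* Let $(p_i)_{i\geq1}$ enumerate the odd primes and let $\Lambda_1=(1,1)\mathbb{Z}+(0,2)\mathbb{Z}$, $\Lambda_2=\mathbb{Z}\times2\mathbb{Z}$, $\Lambda_{2i+1}=(2p_i,1)\mathbb{Z}+(0,2)\mathbb{Z}$ and $\Lambda_{2i+2}=(2^{i+1},1)\mathbb{Z}+(0,2)\mathbb{Z}$ for $i\geq1$. Let $\mathcal{M}_\mathscr{B}=\bigcup_{i\geq1}\Lambda_i$, $\mathcal{F}_\mathscr{B}=\mathbb{Z}^2\setminus\mathcal{M}_\mathscr{B}$, $\eta=\mathbb{1}_{\mathcal{F}_\mathscr{B}}$ and $X_\eta$ its orbit closure under the $\mathbb{Z}^2$-shift. Then $\mathcal{F}_\mathscr{B}=\{-2,0,2\}\times(2\mathbb{Z}+1)$, the system $(X_\eta,(S_{\mathbf{n}})_{\mathbf{n}\in\mathbb{Z}^2})$ is proximal, and there is no infinite pairwise coprime family $\{\widetilde\Lambda_j\}_{j\geq1}$ of proper lattices in $\mathbb{Z}^2$ with $\bigcup_{j\geq1}\widetilde\Lambda_j\subseteq\mathcal{M}_\mathscr{B}$.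
   Context: A lattice in $\mathbb{Z}^2$ is a subgroup of finite index; proper lattices $\Lambda,\Lambda'$ are coprime if $\Lambda+\Lambda'=\mathbb{Z}^2$. Shift: $(S_{\mathbf{n}}x)_{\mathbf{g}}=x_{\mathbf{g}+\mathbf{n}}$ on $\{0,1\}^{\mathbb{Z}^2}$ with the product topology; $X_\eta$ is the closure of the orbit of $\eta$. A system is proximal if every pair $(x,y)$ of its points satisfies $\liminf_{\mathbf{n}\to\infty}D(S_{\mathbf{n}}x,S_{\mathbf{n}}y)=0$ for a compatible metric $D$. *)

(* Defs.v *)
From Stdlib Require Import ZArith Znumtheory List ClassicalEpsilon.
Open Scope Z_scope.

Definition Z2 := (Z * Z)%type.
Definition addZ2 (g h : Z2) : Z2 := (fst g + fst h, snd g + snd h).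
Definition oppZ2 (g : Z2) : Z2 := (- fst g, - snd g).
Definition subZ2 (g h : Z2) : Z2 := addZ2 g (oppZ2 h).

Definition subset2 := Z2 -> Prop.

(* A lattice: a subgroup of Z^2 of finite index (finitely many cosets). *)
Definition is_lattice (L : subset2) : Prop :=
  L (0, 0) /\
  (forall g h, L g -> L h -> L (addZ2 g h)) /\
  (forall g, L g -> L (oppZ2 g)) /\
  exists reps : list Z2, forall g, exists r, In r reps /\ L (subZ2 g r).

Definition proper_lattice (L : subset2) : Prop :=
  is_lattice L /\ exists g, ~ L g.

Definition coprime_lat (L L' : subset2) : Prop :=
  forall g, exists a b, L a /\ L' b /\ g = addZ2 a b.

Definition span2 (v w : Z2) : subset2 :=
  fun g => exists k m : Z, g = (k * fst v + m * fst w, k * snd v + m * snd w).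

(* The lattices Lambda_i (i >= 1), given an enumeration p of the odd primes:
   Lambda_1 = (1,1)Z + (0,2)Z, Lambda_2 = Z x 2Z,
   Lambda_{2k+1} = (2 p_k, 1)Z + (0,2)Z, Lambda_{2k+2} = (2^(k+1), 1)Z + (0,2)Z, k >= 1. *)
Definition Lam (p : nat -> Z) (i : nat) : subset2 :=
  match i with
  | 0%nat => fun _ => False (* unused index *)
  | 1%nat => span2 (1, 1) (0, 2)
  | 2%nat => fun g => exists m, snd g = 2 * m
  | _ => if Nat.odd i
         then span2 (2 * p (Nat.div2 (i - 1)), 1) (0, 2)
         else span2 (2 ^ Z.of_nat (Nat.div2 (i - 2) + 1), 1) (0, 2)
  end.

Definition MB (p : nat -> Z) : subset2 :=
  fun g => exists i : nat, (1 <= i)%nat /\ Lam p i g.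

Definition FB (p : nat -> Z) : subset2 := fun g => ~ MB p g.

Definition config := Z2 -> bool.

Definition eta (p : nat -> Z) : config :=
  fun g => if excluded_middle_informative (FB p g) then true else false.

Definition shift (n : Z2) (x : config) : config := fun g => x (addZ2 g n).

Definition agree_on (r : Z) (x y : config) : Prop :=
  forall a b, Z.abs a <= r -> Z.abs b <= r -> x (a, b) = y (a, b).

(* Orbit closure in the product topology (cylinder sets on boxes form a base). *)
Definition orbit_closure (z : config) : config -> Prop :=
  fun x => forall r : Z, exists n : Z2, agree_on r (shift n z) x.

(* Proximality: liminf_{n -> oo} D(S_n x, S_n y) = 0 for the compatible metric
   D(x,y) = 2^{-sup{r : x,y agree on [-r,r]^2}}; unfolded: for every box radius r
   and every bound N there is n with |n| >= N such that S_n x, S_n y agree on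
   [-r,r]^2. *)
Definition proximal (X : config -> Prop) : Prop :=
  forall x y, X x -> X y ->
  forall r N : Z, exists n : Z2,
    Z.abs (fst n) + Z.abs (snd n) >= N /\ agree_on r (shift n x) (shift n y).

(* Main.v *)
Require Import Defs.
From Stdlib Require Import ZArith Znumtheory List ClassicalEpsilon Classical Arith Lia.
Open Scope Z_scope.

Lemma Lam_odd p k : (1 <= k)%nat -> Lam p (2*k+1)%nat = span2 (2 * p k, 1) (0, 2).
Proof.
  intros Hk. destruct k as [|k]; [lia|].
  replace (2 * S k + 1)%nat with (S (S (S (2*k))))%nat by lia.
  cbn [Lam].
  replace (Nat.odd (S (S (S (2*k))))) with true.
  2:{ symmetry; apply Nat.odd_spec; exists (S k); lia. }
  replace (S (S (S (2 * k))) - 1)%nat with (2 * S k)%nat by lia.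
  rewrite Nat.div2_double. reflexivity.
Qed.

Lemma Lam_even p k : (1 <= k)%nat -> Lam p (2*k+2)%nat = span2 (2 ^ (Z.of_nat k + 1), 1) (0, 2).
Proof.
  intros Hk. destruct k as [|k]; [lia|].
  replace (2 * S k + 2)%nat with (S (S (S (S (2*k)))))%nat by lia.
  cbn [Lam].
  replace (Nat.odd (S (S (S (S (2*k)))))) with false.
  2:{ symmetry. destruct (Nat.odd _) eqn:E; [|reflexivity].
      apply Nat.odd_spec in E. destruct E as [m Hm]. lia. }
  replace (S (S (S (S (2 * k)))) - 2)%nat with (2 * S k)%nat by lia.
  rewrite Nat.div2_double, Nat2Z.inj_add. reflexivity.
Qed.

Lemma Lam_cases p i g : (1 <= i)%nat -> Lam p i g ->
  span2 (1,1) (0,2) g \/ (exists m, snd g = 2 * m) \/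
  (exists k, (1 <= k)%nat /\ span2 (2 * p k, 1) (0, 2) g) \/
  (exists k, (1 <= k)%nat /\ span2 (2 ^ (Z.of_nat k + 1), 1) (0, 2) g).
Proof.
  intros Hi HL.
  destruct (Nat.Even_or_Odd i) as [[k Hk]|[k Hk]]; subst i.
  - destruct k as [|k]; [lia|]. destruct k as [|k].
    + right; left; exact HL.
    + right; right; right. exists (S k). split; [lia|].
      rewrite <- (Lam_even p) by lia. replace (2 * S k + 2)%nat with (2 * S (S k))%nat by lia. exact HL.
  - destruct k as [|k].
    + left; exact HL.
    + right; right; left. exists (S k). split; [lia|]. rewrite <- (Lam_odd p) by lia. exact HL.
Qed.

Lemma two_adic c : c <> 0 -> exists j : nat, exists t, Z.Odd t /\ c = 2 ^ (Z.of_nat j) * t.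
Proof.
  intros Hc.
  remember (Z.to_nat (Z.abs c)) as n eqn:En. revert c Hc En.
  induction n as [n IH] using (well_founded_induction lt_wf).
  intros c Hc En.
  destruct (Z.Even_or_Odd c) as [[c' Hc']|Ho].
  - assert (c' <> 0) by lia.
    destruct (IH (Z.to_nat (Z.abs c')) ltac:(lia) c' H eq_refl) as [j [t [Ht Ec]]].
    exists (S j), t. split; auto. rewrite Nat2Z.inj_succ, Z.pow_succ_r by lia. lia.
  - exists O, c. split; auto. simpl. destruct c; reflexivity.
Qed.

Lemma prime_factor n : 2 <= n -> exists q, prime q /\ (q | n).
Proof.
  intros Hn.
  remember (Z.to_nat n) as m eqn:Em. revert n Hn Em.
  induction m as [m IH] using (well_founded_induction lt_wf).
  intros n Hn Em.
  destruct (prime_dec n) as [Hp|Hp].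
  - exists n. split; auto. apply Z.divide_refl.
  - destruct (not_prime_divide n ltac:(lia) Hp) as [d [Hd Hdn]].
    destruct (IH (Z.to_nat d) ltac:(lia) d ltac:(lia) eq_refl) as [q [Hq Hqd]].
    exists q. split; auto. eapply Z.divide_trans; eauto.
Qed.

Section P.
Variable p : nat -> Z.
Hypothesis hp_odd_prime : forall i, (1 <= i)%nat -> prime (p i) /\ p i <> 2.
Hypothesis hp_surj : forall q, prime q -> q <> 2 -> exists i, (1 <= i)%nat /\ p i = q.

Lemma part1 a b : FB p (a, b) <-> ((a = -2 \/ a = 0 \/ a = 2) /\ Z.Odd b).
Proof.
  split.
  - intros HF. apply NNPP. intros Hn. apply HF.
    destruct (Z.Even_or_Odd b) as [[m Hm]|Hb].
    { exists 2%nat. split; [lia|]. simpl. exists m. exact Hm. }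
    assert (Ha : ~ (a = -2 \/ a = 0 \/ a = 2)) by tauto.
    destruct Hb as [bb Hb].
    destruct (Z.Even_or_Odd a) as [[c Hc]|[aa Haa]].
    + assert (c <> 0) by lia.
      destruct (two_adic c H) as [j [t [[tt Ht] Ec]]].
      destruct j as [|j].
      * change (Z.of_nat 0) with 0 in Ec; rewrite Z.pow_0_r, Z.mul_1_l in Ec. assert (Htb : 3 <= Z.abs t) by lia.
        destruct (prime_factor (Z.abs t) ltac:(lia)) as [q [Hq Hqt]].
        assert (Hqt' : (q | t)) by (apply Z.divide_abs_r; exact Hqt).
        destruct Hqt' as [s Hs].
        assert (Hq2 : q <> 2).
        { intro. subst q. lia. }
        destruct (hp_surj q Hq Hq2) as [k [Hk Hpk]].
        assert (Hso : Z.Odd s).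
        { destruct (Z.Even_or_Odd s) as [[s' Hs']|Hs']; auto. exfalso. lia. }
        destruct Hso as [ss Hss].
        exists (2*k+1)%nat. split; [lia|]. rewrite Lam_odd by lia.
        exists s, (bb - ss). cbn [fst snd]. rewrite Hpk. f_equal; nia.
      * exists (2 * S j + 2)%nat. split; [lia|]. rewrite Lam_even by lia.
        exists t, (bb - tt). cbn [fst snd].
        rewrite Nat2Z.inj_succ, Z.pow_succ_r in Ec by lia.
        rewrite Z.add_1_r, Nat2Z.inj_succ, !Z.pow_succ_r by lia.
        set (P := 2 ^ Z.of_nat j) in *. f_equal; nia.
    + exists 1%nat. split; [lia|]. simpl. exists a, (bb - aa). cbn [fst snd]. f_equal; lia.
  - intros [Ha [bb Hb]] [i [Hi HL]].
    destruct (Lam_cases p i (a,b) Hi HL) as [H|[H|[H|H]]].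
    + destruct H as [k [m Hkm]]. cbn [fst snd] in Hkm. injection Hkm as Ea Eb. lia.
    + destruct H as [m Hm]. cbn [fst snd] in Hm. lia.
    + destruct H as [k [Hk [t [m Htm]]]].
      assert (Ea : a = t*(2*p k) + m*0) by exact (f_equal fst Htm).
      assert (Eb : b = t*1 + m*2) by exact (f_equal snd Htm).
      destruct (hp_odd_prime k Hk) as [Hpr Hp2]. pose proof (prime_ge_2 _ Hpr).
      assert (t <> 0) by lia. set (P := p k) in *. assert (P >= 3) by lia.
      rewrite Z.mul_0_r, Z.add_0_r in Ea.
      destruct (Z.lt_total t 0) as [Ht|[Ht|Ht]]; [|lia|]; destruct Ha as [Ha|[Ha|Ha]]; nia.
    + destruct H as [k [Hk [t [m Htm]]]].
      assert (Ea : a = t*(2 ^ (Z.of_nat k + 1)) + m*0) by exact (f_equal fst Htm).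
      assert (Eb : b = t*1 + m*2) by exact (f_equal snd Htm).
      assert (4 <= 2 ^ (Z.of_nat k + 1)).
      { change 4 with (2^2). apply Z.pow_le_mono_r; lia. }
      assert (t <> 0) by lia. set (P := 2 ^ (Z.of_nat k + 1)) in *.
      rewrite Z.mul_0_r, Z.add_0_r in Ea.
      destruct (Z.lt_total t 0) as [Ht|[Ht|Ht]]; [|lia|]; destruct Ha as [Ha|[Ha|Ha]]; nia.
Qed.
End P.

Lemma eta_true p g : (forall a b, FB p (a,b) -> (a = -2 \/ a = 0 \/ a = 2)) ->
  eta p g = true -> Z.abs (fst g) <= 2.
Proof.
  intros H He. unfold eta in He.
  destruct (excluded_middle_informative (FB p g)) as [HF|]; [|discriminate].
  destruct g as [a b]. apply H in HF. simpl. lia.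
Qed.

Lemma closure_bound p (x : config) : (forall a b, FB p (a,b) -> (a = -2 \/ a = 0 \/ a = 2)) ->
  orbit_closure (eta p) x -> exists A, forall a b, x (a,b) = true -> Z.abs (a - A) <= 4.
Proof.
  intros H Hx.
  destruct (classic (exists a b, x (a,b) = true)) as [[a0 [b0 E0]]|Hn].
  - exists a0. intros a b E.
    destruct (Hx (Z.abs a + Z.abs b + Z.abs a0 + Z.abs b0)) as [n Hn].
    assert (E1 := Hn a b ltac:(lia) ltac:(lia)).
    assert (E2 := Hn a0 b0 ltac:(lia) ltac:(lia)).
    unfold Defs.shift in E1, E2. rewrite E in E1. rewrite E0 in E2.
    apply (eta_true p) in E1; auto. apply (eta_true p) in E2; auto.
    unfold addZ2 in E1, E2. simpl in E1, E2. lia.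
  - exists 0. intros a b E. exfalso. apply Hn. eauto.
Qed.

Lemma part2 p : (forall a b, FB p (a,b) -> (a = -2 \/ a = 0 \/ a = 2)) ->
  proximal (orbit_closure (eta p)).
Proof.
  intros H x y Hx Hy r N.
  destruct (closure_bound p x H Hx) as [Ax HAx].
  destruct (closure_bound p y H Hy) as [Ay HAy].
  set (M := Z.abs N + Z.abs r + Z.abs Ax + Z.abs Ay + 5).
  exists (M, 0). split.
  - simpl. lia.
  - intros a b Ha Hb. unfold Defs.shift, addZ2. simpl.
    destruct (x (a + M, b + 0)) eqn:E1.
    { apply HAx in E1. lia. }
    destruct (y (a + M, b + 0)) eqn:E2.
    { apply HAy in E2. lia. }
    reflexivity.
Qed.

Definition grp (L : subset2) := L (0,0) /\ (forall g h, L g -> L h -> L (addZ2 g h)) /\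
  (forall g, L g -> L (oppZ2 g)).

Lemma grp_scal L a b : grp L -> L (a,b) -> forall k, L (k*a, k*b).
Proof.
  intros [H0 [Hadd Hopp]] Hab.
  assert (Hn : forall n : nat, L (Z.of_nat n * a, Z.of_nat n * b)).
  { induction n as [|n IH].
    - simpl. exact H0.
    - replace (Z.of_nat (S n) * a, Z.of_nat (S n) * b) with (addZ2 (Z.of_nat n * a, Z.of_nat n * b) (a,b)).
      + apply Hadd; auto.
      + unfold addZ2; cbn [fst snd]. rewrite Nat2Z.inj_succ. f_equal; ring. }
  intros k. destruct (Z.le_ge_cases 0 k).
  - replace k with (Z.of_nat (Z.to_nat k)) by lia. apply Hn.
  - replace (k*a, k*b) with (oppZ2 (Z.of_nat (Z.to_nat (-k)) * a, Z.of_nat (Z.to_nat (-k)) * b)).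
    + apply Hopp, Hn.
    + unfold oppZ2; cbn [fst snd]. rewrite Z2Nat.id by lia. f_equal; ring.
Qed.

Lemma key L : grp L -> (forall y, L (0,y) -> Z.Even y) ->
  forall a b a' b', L (a,b) -> L (a',b') -> Z.Odd b -> Z.Even b' -> Z.Odd a' -> False.
Proof.
  intros HG Hy a b a' b' H1 H2 [s Hs] [u Hu] [v Hv].
  pose proof (grp_scal L a b HG H1 a') as X.
  pose proof (grp_scal L a' b' HG H2 a) as Y.
  destruct HG as [_ [Hadd Hopp]].
  pose proof (Hadd _ _ X (Hopp _ Y)) as Z.
  unfold addZ2, oppZ2 in Z; simpl in Z.
  replace (a' * a + - (a * a')) with 0 in Z by ring.
  apply Hy in Z. destruct Z as [w Hw].
  subst. nia.
Qed.

Definition fc (c : nat) (g : Z2) : Z :=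
  match c with 0%nat => snd g | 1%nat => fst g + snd g | _ => fst g end.

Lemma classify L : grp L -> (forall y, L (0,y) -> Z.Even y) ->
  exists c, (c < 3)%nat /\ forall g, L g -> Z.Even (fc c g).
Proof.
  intros HG Hy.
  apply NNPP. intros Hn.
  assert (Hc : forall c, (c < 3)%nat -> exists g, L g /\ Z.Odd (fc c g)).
  { intros c Hc. apply NNPP. intros Hn2. apply Hn. exists c. split; auto.
    intros g Hg. destruct (Z.Even_or_Odd (fc c g)); auto. exfalso. apply Hn2; eauto. }
  destruct (Hc 0%nat ltac:(lia)) as [[au bu] [Hu Ou]].
  destruct (Hc 1%nat ltac:(lia)) as [[av bv] [Hv Ov]].
  destruct (Hc 2%nat ltac:(lia)) as [[aw bw] [Hw Ow]].
  simpl in Ou, Ov, Ow.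
  destruct (Z.Even_or_Odd bw) as [Ebw|Obw].
  { exact (key L HG Hy au bu aw bw Hu Hw Ou Ebw Ow). }
  destruct (Z.Even_or_Odd bv) as [Ebv|Obv].
  { apply (key L HG Hy au bu av bv Hu Hv Ou Ebv).
    destruct Ov as [k Hk]; destruct Ebv as [m Hm]. exists (k - m). lia. }
  destruct HG as [H0 [Hadd Hopp]].
  pose proof (Hadd _ _ Hw (Hopp _ Hv)) as Hd. unfold addZ2, oppZ2 in Hd; simpl in Hd.
  apply (key L (conj H0 (conj Hadd Hopp)) Hy aw bw (aw + - av) (bw + - bv) Hw Hd Obw).
  - destruct Obw as [k Hk]; destruct Obv as [m Hm]. exists (k - m). lia.
  - destruct Ow as [k Hk]; destruct Ov as [m Hm]; destruct Obv as [n Hn']. exists (k - m + n). lia.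
Qed.

Lemma cop_false c L L' : (forall g, L g -> Z.Even (fc c g)) -> (forall g, L' g -> Z.Even (fc c g)) ->
  coprime_lat L L' -> False.
Proof.
  intros H1 H2 Hc.
  destruct (Hc (match c with 0%nat | 1%nat => (0,1) | _ => (1,0) end)) as [a [b [Ha [Hb E]]]].
  apply H1 in Ha. apply H2 in Hb. destruct Ha as [k Hk], Hb as [m Hm].
  destruct a as [a1 a2], b as [b1 b2]. unfold addZ2 in E; simpl in E.
  pose proof (f_equal fst E) as E1. pose proof (f_equal snd E) as E2.
  destruct c as [|[|c]]; cbn [fc fst snd] in *; lia.
Qed.

Lemma part3 p : (forall y, Z.Odd y -> FB p (0,y)) ->
  ~ (exists L : nat -> subset2,
       (forall j, (1 <= j)%nat -> proper_lattice (L j)) /\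
       (forall i j, (1 <= i)%nat -> (1 <= j)%nat -> i <> j -> coprime_lat (L i) (L j)) /\
       (forall j g, (1 <= j)%nat -> L j g -> MB p g)).
Proof.
  intros HF [L [Hprop [Hcop Hsub]]].
  assert (Hcl : forall j, (1 <= j)%nat -> exists c, (c < 3)%nat /\ forall g, L j g -> Z.Even (fc c g)).
  { intros j Hj. apply classify.
    - destruct (Hprop j Hj) as [[H0 [Ha [Ho _]]] _]. repeat split; auto.
    - intros y Hy. destruct (Z.Even_or_Odd y) as [|Oy]; auto. exfalso.
      apply (HF y Oy). apply (Hsub j); auto. }
  destruct (Hcl 1%nat ltac:(lia)) as [c1 [Hc1 P1]].
  destruct (Hcl 2%nat ltac:(lia)) as [c2 [Hc2 P2]].
  destruct (Hcl 3%nat ltac:(lia)) as [c3 [Hc3 P3]].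
  destruct (Hcl 4%nat ltac:(lia)) as [c4 [Hc4 P4]].
  assert (c1 = c2 \/ c1 = c3 \/ c1 = c4 \/ c2 = c3 \/ c2 = c4 \/ c3 = c4)%nat as HH by lia.
  destruct HH as [E|[E|[E|[E|[E|E]]]]]; subst.
  - exact (cop_false _ _ _ P1 P2 (Hcop 1%nat 2%nat ltac:(lia) ltac:(lia) ltac:(lia))).
  - exact (cop_false _ _ _ P1 P3 (Hcop 1%nat 3%nat ltac:(lia) ltac:(lia) ltac:(lia))).
  - exact (cop_false _ _ _ P1 P4 (Hcop 1%nat 4%nat ltac:(lia) ltac:(lia) ltac:(lia))).
  - exact (cop_false _ _ _ P2 P3 (Hcop 2%nat 3%nat ltac:(lia) ltac:(lia) ltac:(lia))).
  - exact (cop_false _ _ _ P2 P4 (Hcop 2%nat 4%nat ltac:(lia) ltac:(lia) ltac:(lia))).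
  - exact (cop_false _ _ _ P3 P4 (Hcop 3%nat 4%nat ltac:(lia) ltac:(lia) ltac:(lia))).
Qed.

Theorem mainTheorem12 (p : nat -> Z)
  (hp_odd_prime : forall i, (1 <= i)%nat -> prime (p i) /\ p i <> 2)
  (hp_inj : forall i j, (1 <= i)%nat -> (1 <= j)%nat -> p i = p j -> i = j)
  (hp_surj : forall q, prime q -> q <> 2 -> exists i, (1 <= i)%nat /\ p i = q) :
  (forall a b : Z, FB p (a, b) <->
     ((a = -2 \/ a = 0 \/ a = 2) /\ Z.Odd b)) /\
  proximal (orbit_closure (eta p)) /\
  ~ (exists L : nat -> subset2,
       (forall j, (1 <= j)%nat -> proper_lattice (L j)) /\
       (forall i j, (1 <= i)%nat -> (1 <= j)%nat -> i <> j -> coprime_lat (L i) (L j)) /\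
       (forall j g, (1 <= j)%nat -> L j g -> MB p g)).
Proof.
  pose proof (part1 p hp_odd_prime hp_surj) as H1.
  split; [exact H1|]. split.
  - apply part2. intros a b H. apply H1 in H. tauto.
  - apply part3. intros y Hy. apply H1. tauto.
Qed.
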